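(* Let $a<b$ be real numbers, let $M\colon[a,b]\to\mathbb{R}$ be non-decreasing, and let $N\colon[M(a),M(b)]\to\mathbb{R}$ be non-decreasing. Let $\Lambda=N\circ M\colon[a,b]\to\mathbb{R}$, let $\lambda$ be the measure on $[a,b]$ corresponding to $\Lambda$, and let $\nu$ be the measure on $[M(a),M(b)]$ corresponding to $N$. Let \[H=\{y\in[M(a),M(b)] : M^{-1}[\{y\}]\text{ contains more than one point}\},\] and let $\Xi\colon[M(a),M(b)]\to[a,b]$ be defined by $\Xi(y)=\sup\{x\in[a,b]: M(x)\le y\}$. Suppose that $N$ is left-continuous at $y$ for each $y\in H$ (where, by convention, $N$ is considered left-continuous at $M(a)$, with $N(M(a)-)=N(M(a))$). Then $\lambda$ is the image measure of $\nu$ under $\Xi$, i.e. $\lambda(E)=\nu(\Xi^{-1}[E])$ for every Borel set $E\subseteq[a,b]$, and for each bounded Borel function $f\colon[a,b]\to\mathbb{R}$, \[\int_a^b f(x)\,dN(M(x))=\int_{M(a)}^{M(b)} f(\Xi(y))\,dN(y).\]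
   Context: ''Non-decreasing'' is what the paper calls increasing. For a non-decreasing function $F\colon[c,d]\to\mathbb{R}$, the measure corresponding to $F$ is the unique Borel measure $\mu$ on $[c,d]$ such that for every continuous $f\colon[c,d]\to\mathbb{R}$, $\int_{[c,d]} f\,d\mu$ equals the Riemann–Stieltjes integral $\int_c^d f(x)\,dF(x)$. For a bounded Borel function $f$, the Lebesgue–Stieltjes integral $\int_c^d f(x)\,dF(x)$ is defined as $\int_{[c,d]} f\,d\mu$. The notation $\int_a^b f(x)\,dN(M(x))$ means $\int_a^b f(x)\,d\Lambda(x)$ with $\Lambda=N\circ M$. *)

(* Defs.v *)
From HB Require Import structures.
From mathcomp Require Import all_boot all_order all_algebra.
From mathcomp Require Import all_classical all_reals all_analysis.
Set Implicit Arguments. Unset Strict Implicit. Unset Printing Implicit Defensive.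
Import Order.TTheory GRing.Theory Num.Theory.
Import numFieldNormedType.Exports.
Local Open Scope classical_set_scope.
Local Open Scope ring_scope.

Section RS.
Variable R : realType.

Definition tagged_partition (c d : R) (s t : seq R) : Prop :=
  size s = (size t).+1 /\ head 0 s = c /\ last 0 s = d /\
  (forall i, (i < size t)%N -> nth 0 s i <= nth 0 t i <= nth 0 s i.+1).

Definition partition_mesh_lt (s : seq R) (delta : R) : Prop :=
  forall i, (i.+1 < size s)%N -> nth 0 s i.+1 - nth 0 s i < delta.

Definition RS_sum (f F : R -> R) (s t : seq R) : R :=
  \sum_(i < size t) f (nth 0 t i) * (F (nth 0 s i.+1) - F (nth 0 s i)).

Definition RS_integral_is (f F : R -> R) (c d I : R) : Prop :=
  forall eps : R, 0 < eps -> exists2 delta : R, 0 < delta &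
    forall s t, tagged_partition c d s t -> partition_mesh_lt s delta ->
      `| RS_sum f F s t - I | < eps.

(* mu (a Borel measure on R carried by [c,d], i.e. a Borel measure on [c,d])
   is the measure corresponding to F on [c,d]. *)
Definition corresponds_to (F : R -> R) (c d : R)
    (mu : {measure set R -> \bar R}) : Prop :=
  mu (~` `[c, d]) = 0%E /\
  forall f : R -> R, {within `[c, d], continuous f} ->
    exists I : R, RS_integral_is f F c d I /\
      (\int[mu]_(x in `[c, d]) (f x)%:E = I%:E)%E.

Definition Xi (M : R -> R) (a b : R) (y : R) : R :=
  sup [set x | a <= x <= b /\ M x <= y].

Definition Hset (M : R -> R) (a b : R) : set R :=
  [set y | M a <= y <= M b /\
     exists x1 x2, [/\ a <= x1 <= b, a <= x2 <= b, x1 <> x2, M x1 = y & M x2 = y]].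

End RS.

(* Main.v *)
Require Import Defs.
From HB Require Import structures.
From mathcomp Require Import all_boot all_order all_algebra.
From mathcomp Require Import all_classical all_reals all_analysis.
From mathcomp Require Import measurable_realfun.
From mathcomp Require Import ring lra.
Import Order.TTheory GRing.Theory Num.Theory.
Import numFieldNormedType.Exports.
Local Open Scope classical_set_scope.
Local Open Scope ring_scope.
Set Implicit Arguments. Unset Strict Implicit. Unset Printing Implicit Defensive.
Section P1.
Variable R : realType.

Definition upt (c d : R) (n : nat) (i : nat) : R := c + i%:R * ((d - c) / n%:R).

Lemma upt0 c d n : upt c d n 0 = c.
Proof. by rewrite /upt mul0r addr0. Qed.

Lemma uptn c d n : (0 < n)%N -> upt c d n n = d.
Proof.
move=> n0; rewrite /upt mulrCA divff ?mulr1; first by rewrite addrC subrK.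
by rewrite pnatr_eq0 -lt0n.
Qed.

Lemma upt_step c d n i : upt c d n i.+1 - upt c d n i = (d - c) / n%:R.
Proof. rewrite /upt -natr1; ring. Qed.

Lemma upt_le c d n i j : c <= d -> (i <= j)%N -> upt c d n i <= upt c d n j.
Proof.
move=> cd ij; rewrite /upt lerD2l ler_wpM2r ?ler_nat //.
by rewrite divr_ge0 ?subr_ge0.
Qed.

Lemma upt_in c d n i : c <= d -> (i <= n)%N -> (0 < n)%N ->
  c <= upt c d n i <= d.
Proof.
move=> cd le n0; apply/andP; split.
  by rewrite -{1}(upt0 c d n); apply: upt_le.
by rewrite -{2}(@uptn c d n n0); apply: upt_le.
Qed.

Lemma uniform_tp c d n : c <= d -> (0 < n)%N ->
  tagged_partition c d (mkseq (upt c d n) n.+1) (mkseq (upt c d n) n).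
Proof.
move=> cd n0; split; first by rewrite !size_mkseq.
split; first by rewrite /mkseq /= upt0.
split.
  rewrite (last_nth 0) size_mkseq /=.
  by rewrite nth_mkseq // uptn.
move=> i; rewrite size_mkseq => ilt.
rewrite !nth_mkseq // ?ltnS ?(ltnW ilt) // lexx /=.
by apply: upt_le.
Qed.

Lemma uniform_mesh c d n delta : (d - c) / n%:R < delta ->
  partition_mesh_lt (mkseq (upt c d n) n.+1) delta.
Proof.
move=> h i; rewrite size_mkseq => ilt.
by rewrite !nth_mkseq // ?(ltnW ilt) // upt_step.
Qed.

Lemma RS_sum_uniform f F c d n :
  RS_sum f F (mkseq (upt c d n) n.+1) (mkseq (upt c d n) n) =
  \sum_(i < n) f (upt c d n i) * (F (upt c d n i.+1) - F (upt c d n i)).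
Proof.
rewrite /RS_sum size_mkseq; apply: eq_bigr => i _.
by rewrite !nth_mkseq ?ltnS // ltnW.
Qed.

Lemma exists_fine (c d delta : R) : 0 < delta -> exists n, (0 < n)%N /\ (d - c) / n%:R < delta.
Proof.
move=> d0; exists (Num.truncn (`|d - c| / delta)).+1; split => //.
set n := (Num.truncn _).+1.
have n0 : 0 < n%:R :> R by rewrite ltr0n.
rewrite ltr_pdivrMr // (le_lt_trans (ler_norm _)) // -ltr_pdivrMl //.
by rewrite mulrC truncnS_gt.
Qed.

End P1.
Section P2.
Variable R : realType.
Implicit Types (c d x y z I B : R) (f F g : R -> R).

Lemma homo_mono F c d : {in `[c, d] &, {homo F : x y / x <= y}} ->
  forall x y, c <= x -> x <= y -> y <= d -> F x <= F y.
Proof.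
move=> hF x y cx xy yd; apply: hF => //; rewrite in_itv /=.
  by rewrite cx (le_trans xy yd).
by rewrite yd (le_trans cx xy).
Qed.

Lemma tel_sum (u : nat -> R) n : \sum_(i < n) (u i.+1 - u i) = u n - u 0%N.
Proof.
elim: n => [|n IH]; first by rewrite big_ord0 subrr.
by rewrite big_ord_recr /= IH addrC addrA subrK.
Qed.

Lemma RS_le f F c d I B eta : c <= d -> 0 < eta -> RS_integral_is f F c d I ->
  (forall n, (0 < n)%N -> (d - c) / n%:R < eta ->
     \sum_(i < n) f (upt c d n i) * (F (upt c d n i.+1) - F (upt c d n i)) <= B) ->
  I <= B.
Proof.
move=> cd eta0 RSI hB; apply/ler_addgt0Pr => e e0.
have [del del0 H] := RSI e e0.
have mp : 0 < Num.min del eta by rewrite lt_min del0 eta0.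
have [n [n0 hn]] := exists_fine c d mp.
move: hn; rewrite lt_min => /andP[hn1 hn2].
have := H _ _ (uniform_tp cd n0) (uniform_mesh hn1).
rewrite RS_sum_uniform ltr_norml => /andP[h1 h2].
have := hB n n0 hn2; lra.
Qed.

Lemma RS_ge f F c d I B eta : c <= d -> 0 < eta -> RS_integral_is f F c d I ->
  (forall n, (0 < n)%N -> (d - c) / n%:R < eta ->
     B <= \sum_(i < n) f (upt c d n i) * (F (upt c d n i.+1) - F (upt c d n i))) ->
  B <= I.
Proof.
move=> cd eta0 RSI hB; apply/ler_addgt0Pr => e e0.
have [del del0 H] := RSI e e0.
have mp : 0 < Num.min del eta by rewrite lt_min del0 eta0.
have [n [n0 hn]] := exists_fine c d mp.
move: hn; rewrite lt_min => /andP[hn1 hn2].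
have := H _ _ (uniform_tp cd n0) (uniform_mesh hn1).
rewrite RS_sum_uniform ltr_norml => /andP[h1 h2].
have := hB n n0 hn2; lra.
Qed.

Lemma RS_one F c d I : c <= d -> RS_integral_is (fun=> 1) F c d I -> I = F d - F c.
Proof.
move=> cd RSI; apply/eqP; rewrite eq_le; apply/andP; split.
  apply: (@RS_le (fun=> 1) F c d I _ 1 cd ltr01 RSI) => n n0 _.
  under eq_bigr do rewrite mul1r.
  by rewrite (tel_sum (fun i => F (upt c d n i))) uptn // upt0.
apply: (@RS_ge (fun=> 1) F c d I _ 1 cd ltr01 RSI) => n n0 _.
under eq_bigr do rewrite mul1r.
by rewrite (tel_sum (fun i => F (upt c d n i))) uptn // upt0.
Qed.

Lemma RS_lower g F c d x I : c <= x -> x <= d ->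
  {in `[c, d] &, {homo F : x y / x <= y}} ->
  (forall u, c <= u <= d -> 0 <= g u) ->
  (forall u, c <= u <= x -> g u = 1) ->
  RS_integral_is g F c d I -> F x - F c <= I.
Proof.
move=> cx xd hF g0 g1 RSI; have cd := le_trans cx xd.
have mF := homo_mono hF.
apply: (@RS_ge g F c d I _ 1 cd ltr01 RSI) => n n0 _.
set p := upt c d n.
pose q i := if p i <= x then p i else x.
have pin i : (i <= n)%N -> c <= p i <= d by move=> ?; apply: upt_in.
have -> : F x - F c = \sum_(i < n) (F (q i.+1) - F (q i)).
  rewrite (tel_sum (fun i => F (q i))) /q /p uptn // upt0 cx.
  by case: ifP => // dx; have -> : d = x by apply/le_anti; rewrite dx xd.
apply: ler_sum => i _.
have ilt : (i < n)%N := ltn_ord i.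
have [ci id] : c <= p i /\ p i <= d by apply/andP/pin/ltnW.
have [ci1 id1] : c <= p i.+1 /\ p i.+1 <= d by apply/andP/pin.
have pii1 : p i <= p i.+1 by apply: upt_le => //; exact: leqnSn.
rewrite /q; case: (leP (p i.+1) x) => hi1.
  rewrite (le_trans pii1 hi1) g1 ?mul1r // ci (le_trans pii1 hi1) //.
case: (leP (p i) x) => hi.
  rewrite g1 ?mul1r ?ci ?hi //; rewrite lerD2r; apply: mF => //; exact: ltW.
rewrite subrr mulr_ge0 // ?g0 ?ci ?id // subr_ge0; exact: mF.
Qed.

End P2.
Section P3.
Variable R : realType.
Implicit Types (c d x y z I B : R) (f F g : R -> R).

Lemma RS_upper g F c d y z I : c <= y -> y < z -> z <= d ->
  {in `[c, d] &, {homo F : x y / x <= y}} ->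
  (forall u, c <= u <= d -> g u <= 1) ->
  (forall u, y <= u <= d -> g u = 0) ->
  RS_integral_is g F c d I -> I <= F z - F c.
Proof.
move=> cy yz zd hF g1 g0 RSI; have cz := le_trans cy (ltW yz).
have cd := le_trans cz zd.
have mF := homo_mono hF.
have ez : 0 < z - y by rewrite subr_gt0.
apply: (RS_le (B := F z - F c) cd ez RSI) => n n0 hn.
set p := upt c d n.
pose q i := if p i <= z then p i else z.
have pin i : (i <= n)%N -> c <= p i <= d by move=> ?; apply: upt_in.
have -> : F z - F c = \sum_(i < n) (F (q i.+1) - F (q i)).
  rewrite (tel_sum (fun i => F (q i))) /q /p uptn // upt0 cz.
  by case: ifP => // dx; have -> : d = z by apply/le_anti; rewrite dx zd.
apply: ler_sum => i _.
have ilt : (i < n)%N := ltn_ord i.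
have [ci id] : c <= p i /\ p i <= d by apply/andP/pin/ltnW.
have [ci1 id1] : c <= p i.+1 /\ p i.+1 <= d by apply/andP/pin.
have pii1 : p i <= p i.+1 by apply: upt_le => //; exact: leqnSn.
have step : p i.+1 = p i + (d - c) / n%:R by rewrite -(upt_step c d n i) addrC subrK.
case: (leP y (p i)) => hy.
  rewrite g0 ?hy ?id // mul0r subr_ge0 /q.
  case: (leP (p i.+1) z) => h1; case: (leP (p i) z) => h2; rewrite ?subrr //.
  - exact: mF.
  - by move: (lt_le_trans h2 pii1); rewrite ltNge h1.
  - exact: mF.
have h1 : p i.+1 <= z by rewrite step; apply: ltW; move: hn; lra.
have h2 : p i <= z := le_trans pii1 h1.
rewrite /q h1 h2 ler_piMl // ?g1 ?ci ?id // subr_ge0; exact: mF.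
Qed.

End P3.
Section P4.
Variable R : realType.

Definition ramp (x h : R) : R -> R :=
  (cst 1) \min ((cst 0) \max (fun u => (x + h - u) / h)).

Lemma ramp_cont x h : continuous (ramp x h).
Proof.
apply: min_fun_continuous; first exact: cst_continuous.
apply: max_fun_continuous; first exact: cst_continuous.
move=> u; apply: (@continuousM R R (fun u => x + h - u) (cst h^-1) u).
  apply: (@continuousB R R^o R (cst (x + h)) id u); first exact: cvg_cst.
  exact: cvg_id.
exact: cvg_cst.
Qed.

Lemma ramp_ge0 x h u : 0 <= ramp x h u.
Proof. by rewrite /ramp /= le_min ler01 le_max lexx. Qed.

Lemma ramp_le1 x h u : ramp x h u <= 1.
Proof. by rewrite /ramp /= ge_min lexx. Qed.

Lemma ramp1 x h u : 0 < h -> u <= x -> ramp x h u = 1.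
Proof.
move=> h0 ux; rewrite /ramp /=; apply/min_idPl.
rewrite le_max; apply/orP; right.
by rewrite ler_pdivlMr // mul1r; move: ux; lra.
Qed.

Lemma ramp0 x h u : 0 < h -> x + h <= u -> ramp x h u = 0.
Proof.
move=> h0 ux; rewrite /ramp /=.
have -> : Num.max 0 ((x + h - u) / h) = 0.
  apply/max_idPl; rewrite pmulr_lle0 ?invr_gt0 //; lra.
by apply/min_idPr; rewrite ler01.
Qed.

End P4.
Section P5.
Variable R : realType.
Local Open Scope ereal_scope.

Lemma meas_cont (D : set R) (g : R -> R) : continuous g ->
  measurable_fun D (EFin \o g).
Proof.
move=> gc; apply/measurable_EFinP; apply: measurable_funTS.
exact: continuous_measurable_fun.
Qed.

Lemma int_ge_indic (mu : {measure set R -> \bar R}) (D A : set R) (g : R -> R) :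
  measurable D -> measurable A -> continuous g ->
  (forall u, D u -> (0 <= g u)%R) -> (forall u, D u -> A u -> g u = 1%R) ->
  mu (A `&` D) <= \int[mu]_(u in D) (g u)%:E.
Proof.
move=> mD mA gc g0 g1; rewrite -integral_indic //.
apply: ge0_le_integral => //.
all: try (by apply: measurableT_comp => //; exact: measurable_indic).
all: try (exact: meas_cont).
move=> u Du; rewrite lee_fin indicE.
case: (boolP (u \in A)) => [/set_mem Au|_]; first by rewrite g1.
by rewrite g0.
Qed.

Lemma int_le_indic (mu : {measure set R -> \bar R}) (D B : set R) (g : R -> R) :
  measurable D -> measurable B -> continuous g ->
  (forall u, D u -> (0 <= g u)%R) ->
  (forall u, D u -> (g u <= 1)%R) -> (forall u, D u -> ~ B u -> g u = 0%R) ->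
  \int[mu]_(u in D) (g u)%:E <= mu (B `&` D).
Proof.
move=> mD mB gc g0 g1 gB; rewrite -integral_indic //.
apply: ge0_le_integral => //.
all: try (by apply: measurableT_comp => //; exact: measurable_indic).
all: try (exact: meas_cont).
all: try (by move=> u Du; rewrite lee_fin g0).
move=> u Du; rewrite lee_fin indicE.
case: (boolP (u \in B)) => [_|/negP uB]; first exact: g1.
by rewrite gB // => /mem_set.
Qed.

End P5.
Section P6.
Variables (R : realType) (F : R -> R) (c d : R) (mu : {measure set R -> \bar R}).
Hypotheses (cd : c <= d) (hF : {in `[c, d] &, {homo F : x y / x <= y}})
  (hmu : corresponds_to F c d mu).

Local Open Scope ereal_scope.

Lemma corr_int (g : R -> R) : continuous g ->
  exists I, RS_integral_is g F c d I /\ \int[mu]_(x in `[c, d]%classic) (g x)%:E = I%:E.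
Proof. by move=> gc; apply: hmu.2; exact: continuous_subspaceT. Qed.

Lemma mu_total : mu `[c, d]%classic = (F d - F c)%:E.
Proof.
have gc : continuous (fun _ : R => 1%R : R) by move=> ?; exact: cvg_cst.
have [I [RSI hI]] := corr_int gc.
by rewrite -(RS_one cd RSI) -hI integral_cst //= ?mul1e.
Qed.

Lemma mu_finite A : measurable A -> mu A < +oo.
Proof.
move=> mA; apply: (@le_lt_trans _ _ (mu setT)).
  by apply: le_measure; rewrite ?inE.
rewrite -(setUv `[c, d]%classic) measureU //; last exact: setICr.
- by move: mu_total (hmu.1) => /= -> ->; rewrite adde0 ltry.
- by apply: measurableC; exact: measurable_itv.
Qed.

Lemma mu_upper x z : (c <= x)%R -> (x < z)%R -> (z <= d)%R ->
  mu `[c, x]%classic <= (F z - F c)%:E.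
Proof.
move=> cx xz zd; set h := ((z - x) / 2)%R.
have h0 : (0 < h)%R by rewrite /h divr_gt0 // subr_gt0.
have [I [RSI hI]] := corr_int (@ramp_cont R x h).
have -> : `[c, x]%classic = `[c, x]%classic `&` `[c, d]%classic.
  apply/esym/setIidl => u /=; rewrite !in_itv /= => /andP[-> ux] /=.
  by apply: le_trans zd; apply: le_trans (ltW xz).
apply: le_trans (_ : \int[mu]_(u in `[c, d]%classic) (ramp x h u)%:E <= _).
  apply: int_ge_indic; rewrite ?measurable_itv //; first exact: ramp_cont.
    by move=> u _; exact: ramp_ge0.
  by move=> u _; rewrite /= in_itv /= => /andP[_ ux]; apply: ramp1.
rewrite hI lee_fin; apply: (RS_upper (y := (x + h)%R)) RSI => //.
- by rewrite (le_trans cx) // lerDl ltW.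
- by rewrite /h; lra.
- by move=> u _; exact: ramp_le1.
- by move=> u /andP[xu _]; apply: ramp0.
Qed.

Lemma mu_lowerW x w : (c <= x)%R -> (x < w)%R -> (w <= d)%R ->
  (F x - F c)%:E <= mu `[c, w]%classic.
Proof.
move=> cx xw wd; set h := (w - x)%R.
have h0 : (0 < h)%R by rewrite /h subr_gt0.
have [I [RSI hI]] := corr_int (@ramp_cont R x h).
have -> : `[c, w]%classic = `[c, w]%classic `&` `[c, d]%classic.
  apply/esym/setIidl => u /=; rewrite !in_itv /= => /andP[-> uw] /=.
  exact: le_trans wd.
apply: le_trans (_ : _ <= \int[mu]_(u in `[c, d]%classic) (ramp x h u)%:E) _.
  rewrite hI lee_fin; apply: (RS_lower (x := x)) RSI => //.
  - by apply: le_trans wd; exact: ltW.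
  - by move=> u _; exact: ramp_ge0.
  - by move=> u /andP[_ ux]; apply: ramp1.
apply: int_le_indic; rewrite ?measurable_itv //; first exact: ramp_cont.
- by move=> u _; exact: ramp_ge0.
- by move=> u _; exact: ramp_le1.
move=> u; rewrite /= !in_itv /= => /andP[cu ud] nw; apply: ramp0 => //.
rewrite /h addrC subrK; apply: ltW; rewrite ltNge; apply/negP => uw.
by apply: nw; rewrite cu uw.
Qed.

End P6.
Section P7.
Variables (R : realType) (F : R -> R) (c d : R) (mu : {measure set R -> \bar R}).
Hypotheses (cd : c <= d) (hF : {in `[c, d] &, {homo F : x y / x <= y}})
  (hmu : corresponds_to F c d mu).

Local Open Scope ereal_scope.

Let muT := mu_total cd hmu.
Let muF := mu_finite cd hmu.
Let muU := mu_upper hF hmu.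
Let muW := mu_lowerW hF hmu.

Lemma mu_fin A : measurable A -> mu A \is a fin_num.
Proof. by move=> mA; rewrite ge0_fin_numE ?muF. Qed.

Lemma mu_L x e : (c <= x)%R -> (x < d)%R -> (0 < e)%R ->
  exists z, [/\ (x < z)%R, (z <= d)%R & (F z - F c)%:E <= mu `[c, x]%classic + e%:E].
Proof.
move=> cx xd e0.
pose A n := `[c, (x + (d - x) / n.+1%:R)%R]%classic.
have dx0 : (0 < d - x)%R by rewrite subr_gt0.
have mA n : measurable (A n) by exact: measurable_itv.
have ni : nonincreasing_seq A.
  move=> n m nm; apply/subsetPset => u; rewrite /A /= !in_itv /= => /andP[-> um] /=.
  apply: (le_trans um); rewrite lerD2l ler_pM2l // lef_pV2 ?posrE ?ltr0n //.
  by rewrite ler_nat ltnS.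
have capA : \bigcap_n A n = `[c, x]%classic.
  apply/seteqP; split => u /=.
    move=> hu; have := hu 0%N Logic.I; rewrite /A /= !in_itv /= => /andP[-> _] /=.
    rewrite leNgt; apply/negP => xu.
    have ux0 : (0 < u - x)%R by rewrite subr_gt0.
    have [k [k0 hk]] := exists_fine x d ux0.
    have := hu k.-1 Logic.I; rewrite /A /= in_itv /= prednK // => /andP[_].
    by move: hk; lra.
  rewrite in_itv /= => /andP[cu ux] n _; rewrite /A /= in_itv /= cu /=.
  apply: (le_trans ux); rewrite lerDl divr_ge0 // ltW //.
have cv : mu \o A @ \oo --> mu `[c, x]%classic.
  rewrite -capA; apply: nonincreasing_cvg_mu => //.
    exact: muF.
  by rewrite capA; exact: measurable_itv.
have fx := mu_fin (measurable_itv `[c, x]).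
have [n hn] : exists n, mu (A n) <= mu `[c, x]%classic + e%:E.
  case: (pselect (exists n, mu (A n) <= mu `[c, x]%classic + e%:E)) => // Hn.
  exfalso.
  have H n : mu `[c, x]%classic + e%:E <= mu (A n).
    by apply: ltW; rewrite ltNge; apply/negP => h; apply: Hn; exists n.
  have : mu `[c, x]%classic + e%:E <= lim (mu \o A @ \oo).
    by apply: lime_ge; [exact: cvgP cv | exact: nearW].
  rewrite (cvg_lim _ cv) //.
  move: fx; case: (mu `[c, x]%classic) => // r _.
  by rewrite -EFinD lee_fin; lra.
have t1 : ((d - x) / n.+1%:R <= d - x)%R.
  by rewrite ler_pdivrMr ?ltr0n // ler_pMr // ler1n.
have t0 : (0 < (d - x) / n.+1%:R)%R by rewrite divr_gt0 // ltr0n.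
move: hn t1 t0; rewrite /A; set t := ((d - x) / n.+1%:R)%R => hn t1 t0.
set w := (x + t)%R.
have xw : (x < w)%R by rewrite /w; lra.
have wd : (w <= d)%R by rewrite /w; lra.
exists ((x + w) / 2)%R; split.
- by move: xw; lra.
- by move: xw wd; lra.
apply: le_trans hn; apply: muW; move: cx xw wd; rewrite /w; lra.
Qed.

Lemma mu_LW x : (c <= x)%R -> (x <= d)%R -> (F x - F c)%:E <= mu `[c, x]%classic.
Proof.
move=> cx xd; case: (ltP x d) => xd'.
  apply/lee_addgt0Pr => e e0; have [z [xz zd h]] := mu_L cx xd' e0.
  apply: le_trans h; rewrite lee_fin lerD2r; apply: (homo_mono hF) => //.
  exact: ltW.
have -> : x = d by apply/le_anti; rewrite xd xd'.
by rewrite muT.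
Qed.

Lemma mu_half m : (c <= m)%R -> (m <= d)%R -> mu `[c, m[%classic <= (F m - F c)%:E.
Proof.
move=> cm md; case: (ltP c m) => cm'; last first.
  have -> : m = c by apply/le_anti; rewrite cm cm'.
  have -> : `[c, c[%classic = set0.
    by apply/seteqP; split => u //=; rewrite in_itv /= => /andP[h1 h2]; move: h2; rewrite ltNge h1.
  by rewrite measure0 subrr.
pose B n := `[c, (m - (m - c) / n.+2%:R)%R]%classic.
have mc0 : (0 < m - c)%R by rewrite subr_gt0.
have mB n : measurable (B n) by exact: measurable_itv.
have tle n : ((m - c) / n.+2%:R <= m - c)%R.
  by rewrite ler_pdivrMr ?ltr0n // ler_pMr // ler1n.
have tgt n : (0 < (m - c) / n.+2%:R)%R by rewrite divr_gt0 // ltr0n.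
have nd : nondecreasing_seq B.
  move=> n k nk; apply/subsetPset => u; rewrite /B /= !in_itv /= => /andP[-> um] /=.
  apply: (le_trans um); rewrite lerD2l lerN2 ler_pM2l // lef_pV2 ?posrE ?ltr0n //.
  by rewrite ler_nat !ltnS.
have cupB : \bigcup_n B n = `[c, m[%classic.
  apply/seteqP; split => u /=.
    move=> [n _]; rewrite /B /= !in_itv /= => /andP[-> um] /=.
    by apply: (le_lt_trans um); rewrite ltrBlDr ltrDl.
  rewrite in_itv /= => /andP[cu um].
  have mu0 : (0 < m - u)%R by rewrite subr_gt0.
  have [k [k0 hk]] := exists_fine c m mu0.
  exists k => //; rewrite /B /= in_itv /= cu /=.
  have : ((m - c) / k.+2%:R <= (m - c) / k%:R)%R.
    rewrite ler_pM2l // lef_pV2 ?posrE ?ltr0n // ler_nat; exact: (leq_trans (leqnSn k) (leqnSn _)).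
  move: hk; set t1 := ((m - c) / k.+2%:R)%R; set t2 := ((m - c) / k%:R)%R; lra.
have cv : mu \o B @ \oo --> mu `[c, m[%classic.
  rewrite -cupB; apply: nondecreasing_cvg_mu => //.
  by rewrite cupB; exact: measurable_itv.
rewrite -(cvg_lim _ cv) //; apply: lime_le; first exact: cvgP cv.
apply: nearW => n /=; apply: muU => //.
- by move: (tle n); set t := ((m - c) / n.+2%:R)%R; lra.
- by move: (tgt n); set t := ((m - c) / n.+2%:R)%R; lra.
Qed.

End P7.
Section P8.
Variables (R : realType) (M : R -> R) (a b : R).
Hypotheses (ab : a <= b) (hM : {in `[a, b] &, {homo M : x y / x <= y}}).

Let S y := [set x | a <= x <= b /\ M x <= y].

Lemma S_ne y : M a <= y -> S y !=set0.
Proof. by move=> ay; exists a; split => //; rewrite lexx ab. Qed.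

Lemma S_ub y : has_ubound (S y).
Proof. by exists b => x [/andP[_ ->]]. Qed.

Lemma Xi_in y : M a <= y -> a <= Xi M a b y <= b.
Proof.
move=> ay; apply/andP; split.
  by apply: (ub_le_sup (S_ub y)); split => //; rewrite lexx ab.
by apply: ge_sup; [exact: S_ne | move=> x [/andP[_ ->]]].
Qed.

Lemma Xi_le y x : M a <= y ->
  (Xi M a b y <= x <-> forall x', a <= x' <= b -> x < x' -> y < M x').
Proof.
move=> ay; split.
  move=> hx x' x'ab xx'; rewrite ltNge; apply/negP => Mx'.
  have : x' <= Xi M a b y by apply: (ub_le_sup (S_ub y)).
  by move=> /(le_trans)/(_ hx); rewrite leNgt xx'.
move=> h; apply: ge_sup; first exact: S_ne.
move=> s [sab Ms]; rewrite leNgt; apply/negP => xs.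
by have := h s sab xs; rewrite ltNge Ms.
Qed.

Definition Xi' (y : R) : R := if y < M a then a else Xi M a b y.

Lemma Xi'_nd : {homo Xi' : x y / x <= y}.
Proof.
move=> y1 y2 y12; rewrite /Xi'.
case: (ltP y1 (M a)) => h1.
  by case: (ltP y2 (M a)) => h2 //; have /andP[] := Xi_in h2.
have h2 : M a <= y2 := le_trans h1 y12.
rewrite ltNge h2 /=.
apply: sup_le; last first.
  split; [exact: S_ne | exact: S_ub].
  exact: S_ne.
move=> s [sab Ms]; exists s; split => //; split => //; exact: (le_trans Ms y12).
Qed.

Lemma Xi'_in y : a <= Xi' y <= b.
Proof.
rewrite /Xi'; case: (ltP y (M a)) => h; first by rewrite lexx ab.
exact: Xi_in.
Qed.

Lemma Xi'E y : M a <= y -> Xi' y = Xi M a b y.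
Proof. by move=> h; rewrite /Xi' ltNge h. Qed.

End P8.
Section PF.
Variables (R : realType) (mu : {measure set R -> \bar R}) (X : {mfun R >-> R}).
Local Open Scope ereal_scope.

Definition pfw := pushforward mu X.

Let pfw0 : pfw set0 = 0%E.
Proof. exact: measure0. Qed.

Let pfw_ge0 A : (0 <= pfw A)%E.
Proof. exact: measure_ge0. Qed.

Let pfw_sigma_additive : semi_sigma_additive pfw.
Proof. exact: measure_semi_sigma_additive. Qed.

HB.instance Definition _ := isMeasure.Build _ _ _ pfw
  pfw0 pfw_ge0 pfw_sigma_additive.

End PF.
Section P10.
Variable R : realType.
Local Open Scope ereal_scope.

Lemma zero_out (mu : {measure set R -> \bar R}) (D A : set R) :
  measurable D -> measurable A -> mu (~` D) = 0 -> mu A = mu (A `&` D).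
Proof.
move=> mD mA h0.
have mC : measurable (~` D) by exact: measurableC.
have -> : mu (A `&` D) = mu (A `&` D) + mu (A `&` ~` D).
  have : mu (A `&` ~` D) = 0.
    apply/le_anti; rewrite measure_ge0 andbT -h0.
    by apply: le_measure; rewrite ?inE //; exact: measurableI.
  by move=> ->; rewrite adde0.
rewrite -measureU //; try exact: measurableI.
- by rewrite -setIUr setUv setIT.
- by rewrite setIACA setICr setI0.
Qed.

Lemma eq_by_approx (u v : \bar R) (Phi : R -> \bar R) (P : R -> Prop) :
  (forall x, P x -> u <= Phi x) -> (forall x, P x -> v <= Phi x) ->
  (forall e : R, (0 < e)%R -> exists2 x, P x & Phi x <= u + e%:E) ->
  (forall e : R, (0 < e)%R -> exists2 x, P x & Phi x <= v + e%:E) -> u = v.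
Proof.
move=> hu hv au av; apply/le_anti/andP; split.
  apply/lee_addgt0Pr => e e0; have [x Px h] := av e e0.
  exact: le_trans (hu x Px) h.
apply/lee_addgt0Pr => e e0; have [x Px h] := au e e0.
exact: le_trans (hv x Px) h.
Qed.

Lemma le_meas (mu : {measure set R -> \bar R}) (A B : set R) :
  measurable A -> measurable B -> A `<=` B -> mu A <= mu B.
Proof. by move=> mA mB AB; apply: le_measure; rewrite ?inE. Qed.

End P10.
Section Main.
Variables (R : realType) (a b : R) (M N : R -> R) (lam nu : {measure set R -> \bar R}).
Hypotheses (ab : a < b)
  (hM : {in `[a, b] &, {homo M : x y / x <= y}})
  (hN : {in `[M a, M b] &, {homo N : x y / x <= y}})
  (hlam : corresponds_to (N \o M) a b lam)
  (hnu : corresponds_to N (M a) (M b) nu)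
  (hH : forall y, Hset M a b y -> y = M a \/ N x @[x --> y^'-] --> N y).

Let ab' : a <= b := ltW ab.
Let mM := homo_mono hM.
Let mN := homo_mono hN.
Let Mab : M a <= M b := mM (lexx a) ab' (lexx b).

Let MIn x : a <= x -> x <= b -> M a <= M x <= M b.
Proof. by move=> ax xb; rewrite mM ?lexx // mM. Qed.

Let hL : {in `[a, b] &, {homo (N \o M) : x y / x <= y}}.
Proof.
move=> x y; rewrite !in_itv /= => /andP[ax xb] /andP[ay yb] xy /=.
have /andP[h1 h2] := MIn ax xb; have /andP[h3 h4] := MIn ay yb.
by apply: mN => //; apply: mM.
Qed.

Let mX : measurable_fun setT (Xi' M a b) :=
  nondecreasing_measurable measurableT (Xi'_nd M ab').

Let X : {mfun R >-> R} := HB.pack (Xi' M a b) (isMeasurableFun.Build _ _ _ _ _ mX).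

Let mI : measurable `[M a, M b]%classic := measurable_itv _.

Let T x := X @^-1` `]-oo, x]%classic `&` `[M a, M b]%classic.

Let mT x : measurable (T x).
Proof.
apply: measurableI; last exact: measurable_itv.
by rewrite -[X @^-1` _]setTI; apply: mX => //; exact: measurable_itv.
Qed.

Let TP x y : T x y <->
  (M a <= y <= M b /\ forall x', a <= x' <= b -> x < x' -> y < M x').
Proof.
rewrite /T /= !in_itv /=.
split.
  move=> [hx /andP[h1 h2]]; split; first by rewrite h1 h2.
  by apply/(Xi_le ab' x h1); rewrite -Xi'E.
move=> [/andP[h1 h2] h]; split; last by rewrite h1 h2.
by rewrite /= Xi'E //; apply/(Xi_le ab' x h1).
Qed.

Local Open Scope ereal_scope.

Lemma key x : (a <= x)%R -> (x < b)%R -> lam `[a, x]%classic = nu (T x).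
Proof.
move=> ax xb.
apply: (@eq_by_approx _ _ _ (fun x' => (N (M x') - N (M a))%:E)
          (fun x' => (x < x' <= b)%R)).
- by move=> x' /andP[xx' x'b]; exact: (mu_upper hL hlam).
- move=> x' /andP[xx' x'b].
  have ax' : (a <= x')%R by apply: le_trans (ltW xx').
  have /andP[h1 h2] := MIn ax' x'b.
  apply: le_trans (mu_half hN hnu h1 h2).
  apply: le_meas; [exact: mT | exact: measurable_itv |].
  move=> y /TP [/andP[y1 y2] h]; rewrite /= in_itv /= y1 /=.
  by apply: h => //; rewrite ax'.
- move=> e e0; have [z [xz zb h]] := mu_L ab' hL hlam ax xb e0.
  by exists z => //; rewrite xz.
move=> e e0.
pose E := [set M x' | x' in `]x, b]%classic].
have bE : `]x, b]%classic b by rewrite /= in_itv /= xb lexx.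
have Ene : E !=set0 by exists (M b); exists b.
have Elb : lbound E (M a).
  move=> _ [x' hx' <-]; move: hx'; rewrite /= in_itv /= => /andP[xx' x'b].
  by have /andP[] := MIn (le_trans ax (ltW xx')) x'b.
have hinf : has_inf E by split => //; exists (M a).
set m := inf E.
have mMa : (M a <= m)%R := lb_le_inf Ene Elb.
have mlb x' : (x < x' <= b)%R -> (m <= M x')%R.
  by move=> hx'; apply: (ge_inf (ex_intro _ _ Elb)); exists x' => //; rewrite /= in_itv.
have mMb : (m <= M b)%R by apply: mlb; rewrite xb lexx.
case: (pselect (exists2 x1, (x < x1 <= b)%R & M x1 = m)) => [[x1 hx1 Mx1]|nB].
  have sub y : (M a <= y)%R -> (y < m)%R -> `[M a, y]%classic `<=` T x.
    move=> ay ym u; rewrite /= in_itv /= => /andP[u1 u2]; apply/TP; split.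
      by rewrite u1 /=; apply: le_trans (ltW (le_lt_trans u2 ym)) mMb.
    move=> x' /andP[ax' x'b] xx'; apply: (le_lt_trans u2); apply: (lt_le_trans ym).
    by apply: mlb; rewrite xx'.
  case: (eqVneq m (M a)) => [mE|mneq].
    exists x1 => //; rewrite Mx1 mE subrr; apply: adde_ge0 => //.
    by rewrite lee_fin ltW.
  have mgt : (M a < m)%R by rewrite lt_neqAle eq_sym mneq mMa.
  have /andP[xx1 x1b] := hx1.
  set x2 := ((x + x1) / 2)%R.
  have xx2 : (x < x2)%R by rewrite /x2; lra.
  have x2x1 : (x2 < x1)%R by rewrite /x2; lra.
  have Mx2 : M x2 = m.
    apply/le_anti; rewrite mlb ?xx2 ?(le_trans (ltW x2x1)) // andbT -Mx1.
    by apply: mM => //; [exact: le_trans ax (ltW xx2) | exact: ltW].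
  have Hm : Hset M a b m.
    split; first by rewrite mMa mMb.
    exists x1, x2; split => //.
    - by rewrite (le_trans ax (ltW xx1)).
    - by rewrite (le_trans ax (ltW xx2)) /= (le_trans (ltW x2x1)).
    - by move=> h; move: x2x1; rewrite h ltxx.
  case: (hH Hm) => [mE|cv]; first by move: mneq; rewrite mE eqxx.
  have [y [[h1 h2] h3]] := @filter_ex _ _ (at_left_proper_filter m) _ (filterI (filterI (cvgr_dist_lt _ _ cv _ e0)
     (nbhs_left_gt mgt)) (nbhs_left_lt m)).
  exists x1 => //.
  have ay : (M a <= y)%R := ltW h2.
  have yMb : (y <= M b)%R := le_trans (ltW h3) mMb.
  apply: le_trans (_ : (N y - N (M a))%:E + e%:E <= _); last first.
    apply: leeD2r; apply: le_trans (mu_LW Mab hN hnu ay yMb) _.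
    by apply: le_meas; [exact: measurable_itv | exact: mT | exact: sub].
  rewrite -EFinD lee_fin Mx1; move: h1; rewrite ltr_norml => /andP[h1 h1'].
  lra.
have gt x' : (x < x' <= b)%R -> (m < M x')%R.
  move=> hx'; rewrite lt_neqAle mlb // andbT; apply/eqP => h.
  by apply: nB; exists x'.
have mb : (m < M b)%R by apply: gt; rewrite xb lexx.
have sub : `[M a, m]%classic `<=` T x.
  move=> u; rewrite /= in_itv /= => /andP[u1 u2]; apply/TP; split.
    by rewrite u1 /= (le_trans u2 mMb).
  move=> x' /andP[ax' x'b] xx'; apply: (le_lt_trans u2); apply: gt.
  by rewrite xx'.
have [z [mz zMb hz]] := mu_L Mab hN hnu mMa mb e0.
have zm0 : (0 < z - m)%R by rewrite subr_gt0.
have [_ [x' hx' <-] he'] := inf_adherent zm0 hinf.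
move: hx'; rewrite /= in_itv /= => /andP[xx' x'b].
exists x'; first by rewrite xx'.
have ax' : (a <= x')%R by apply: le_trans (ltW xx').
have /andP[h1 h2] := MIn ax' x'b.
apply: le_trans (_ : (N z - N (M a))%:E <= _).
  rewrite lee_fin lerD2r; apply: mN => //; move: he'; rewrite -/m; lra.
apply: le_trans hz _; apply: leeD2r.
by apply: le_meas; [exact: measurable_itv | exact: mT | exact: sub].
Qed.

Let mXp A : measurable A -> measurable (X @^-1` A).
Proof. by move=> mA; rewrite -[X @^-1` A]setTI; apply: mX. Qed.

Local Notation m2 := (pfw nu X).

Let lam_fin A : measurable A -> lam A < +oo := fun mA => mu_finite ab' hlam mA.
Let nu_fin A : measurable A -> nu A < +oo := fun mA => mu_finite Mab hnu mA.

Let m2_fin A : measurable A -> m2 A < +oo.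
Proof. by move=> mA; apply: nu_fin; exact: mXp. Qed.

Let Xin y : (a <= X y <= b)%R := Xi'_in M ab' y.

Lemma on_ray x : lam `]-oo, x]%classic = m2 `]-oo, x]%classic.
Proof.
have mr : measurable `]-oo, x]%classic by exact: measurable_itv.
rewrite /pfw /pushforward.
rewrite (zero_out (measurable_itv `[a, b]) mr hlam.1).
rewrite (zero_out mI (mXp mr) hnu.1) -/(T x).
case: (ltP x a) => xa.
  have -> : `]-oo, x]%classic `&` `[a, b]%classic = set0.
    apply/seteqP; split => u //=; rewrite !in_itv /= => -[ux /andP[au _]].
    by move: (le_lt_trans (le_trans au ux) xa); rewrite ltxx.
  have -> : T x = set0.
    apply/seteqP; split => u //=; rewrite /T /= !in_itv /= => -[ux _].
    have /andP[h _] := Xin u.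
    by move: (le_lt_trans (le_trans h ux) xa); rewrite ltxx.
  by rewrite !measure0.
case: (ltP x b) => xb.
  have -> : `]-oo, x]%classic `&` `[a, b]%classic = `[a, x]%classic.
    apply/seteqP; split => u /=; rewrite !in_itv /=.
      by move=> [ux /andP[au _]]; rewrite au ux.
    by move=> /andP[au ux]; rewrite ux au /= (le_trans ux (ltW xb)).
  exact: key.
have -> : `]-oo, x]%classic `&` `[a, b]%classic = `[a, b]%classic.
  apply/setIidr => u /=; rewrite !in_itv /= => /andP[_ ub]; exact: le_trans xb.
have -> : T x = `[M a, M b]%classic.
  apply/setIidr => u _ /=; rewrite in_itv /=.
  by have /andP[_ h] := Xin u; exact: le_trans xb.
by rewrite (mu_total ab' hlam) (mu_total Mab hnu).
Qed.

Lemma ocitv_eq A : ocitv A -> lam A = m2 A.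
Proof.
move=> /ocitvP[->|[[x1 x2] /= x12 ->]]; first by rewrite !measure0.
have -> : `]x1, x2]%classic = `]-oo, x2]%classic `\` `]-oo, x1]%classic.
  apply/seteqP; split => u /=; rewrite !in_itv /=.
    by move=> /andP[h1 h2]; split => //; apply/negP; rewrite -ltNge.
  by move=> [h2 /negP]; rewrite -ltNge => h1; rewrite h1 h2.
have hI : `]-oo, x2]%classic `&` `]-oo, x1]%classic = `]-oo, x1]%classic.
  apply/setIidr => u /=; rewrite !in_itv /= => h; exact: le_trans (ltW x12).
have m1 := measurable_itv `]-oo, x1].
have m2' := measurable_itv `]-oo, x2].
rewrite (measureD m2' m1 (lam_fin m2')) (measureD m2' m1 (m2_fin m2')) hI.
by congr (_ - _); exact: on_ray.
Qed.

Lemma lam_m2 A : measurable A -> lam A = m2 A.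
Proof.
move=> mA; apply: (@measure_unique _ R R (@ocitv R) (fun n => `](- n%:R)%R, (n%:R)%R]%classic)) => //.
- exact: ocitvI.
- move=> n; exact: is_ocitv.
- apply/seteqP; split => u // _.
  exists (Num.truncn `|u|).+1 => //; rewrite /= in_itv /=.
  have h := truncnS_gt `|u|.
  have h1 := ler_norm u; have h2 := ler_norm (- u); rewrite normrN in h2.
  by apply/andP; split; lra.
- exact: ocitv_eq.
- by move=> k; apply: lam_fin; exact: measurable_itv.
Qed.

Lemma main_concl :
  (forall E : set R, measurable E -> E `<=` `[a, b] ->
     lam E = nu (`[M a, M b] `&` Xi M a b @^-1` E)) /\
  (forall f : R -> R, measurable_fun `[a, b] f ->
     (exists C : R, forall x, (a <= x <= b)%R -> (`|f x| <= C)%R) ->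
     (\int[lam]_(x in `[a, b]) (f x)%:E =
      \int[nu]_(y in `[M a, M b]) (f (Xi M a b y))%:E)).
Proof.
have XE y : y \in `[M a, M b] -> Xi' M a b y = Xi M a b y.
  by rewrite in_itv /= => /andP[h _]; exact: Xi'E.
split.
  move=> E mE Eab; rewrite lam_m2 // /pfw /pushforward (zero_out mI (mXp mE) hnu.1).
  congr (nu _); apply/seteqP; split => y /=.
    by move=> [hy yI]; split => //; move: hy; rewrite /= (XE y yI).
  by move=> [yI hy]; split => //; rewrite /= (XE y yI).
move=> f mf [C hC].
have mab : measurable `[a, b]%classic by exact: measurable_itv.
rewrite (eq_measure_integral (pfw nu X)); last first.
  by move=> A mA _; exact: lam_m2.
pose f' := f \_ `[a, b]%classic.
have f'E x : (a <= x <= b)%R -> f' x = f x.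
  by move=> h; rewrite /f' patchT // inE /= in_itv.
have mf' : measurable_fun setT f'.
  apply: (measurable_restrict f mab measurableT).1.
  by rewrite setTI.
transitivity (\int[pfw nu X]_(x in `[a, b]) (f' x)%:E).
  apply: eq_integral => x; rewrite inE /= in_itv /= => h; by rewrite f'E.
have mfX : measurable_fun setT (f' \o X).
  by apply: measurableT_comp => //.
have bd : [bounded (f' \o X) x | x in setT].
  exists C; split; first exact: num_real.
  move=> K CK x _ /=; rewrite f'E ?Xin //; exact: le_trans (hC _ (Xin x)) (ltW CK).
have intf : nu.-integrable (X @^-1` `[a, b]%classic) ((EFin \o f') \o X).
  have -> : X @^-1` `[a, b]%classic = setT.
    by apply/seteqP; split => y // _; rewrite /= in_itv; exact: Xin.
  apply: measurable_bounded_integrable => //.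
  by apply: nu_fin.
transitivity (\int[nu]_(x in X @^-1` `[a, b]%classic) ((EFin \o f') \o X) x).
  have mX' : measurable_fun setT X := mX.
  rewrite /pfw (integral_pushforward mX') //.
  exact/measurable_EFinP.
have -> : X @^-1` `[a, b]%classic = setT.
  by apply/seteqP; split => y // _; rewrite /= in_itv; exact: Xin.
have intf' : nu.-integrable setT ((EFin \o f') \o X).
  by apply: measurable_bounded_integrable => //; apply: nu_fin.
rewrite (negligible_integral (measurableC mI) measurableT intf' hnu.1).
rewrite setTD setCK; apply: eq_integral => y yI /=.
have yI' : y \in `[M a, M b] by move: yI; rewrite inE.
have My : (M a <= y)%R by move: yI'; rewrite in_itv /= => /andP[].
by rewrite XE // f'E //; exact: Xi_in.
Qed.

End Main.

Theorem mainTheorem2 (R : realType) (a b : R) (M N : R -> R)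
  (lam nu : {measure set R -> \bar R}) :
  a < b ->
  {in `[a, b] &, {homo M : x y / x <= y}} ->
  {in `[M a, M b] &, {homo N : x y / x <= y}} ->
  corresponds_to (N \o M) a b lam ->
  corresponds_to N (M a) (M b) nu ->
  (forall y, Hset M a b y -> y = M a \/ N x @[x --> y^'-] --> N y) ->
  (forall E : set R, measurable E -> E `<=` `[a, b] ->
     lam E = nu (`[M a, M b] `&` Xi M a b @^-1` E)) /\
  (forall f : R -> R, measurable_fun `[a, b] f ->
     (exists C : R, forall x, a <= x <= b -> `|f x| <= C) ->
     (\int[lam]_(x in `[a, b]) (f x)%:E =
      \int[nu]_(y in `[M a, M b]) (f (Xi M a b y))%:E)%E).
Proof.
move=> ab hM hN hlam hnu hH.
exact: (main_concl ab hM hN hlam hnu hH).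
Qed.
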